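(* Consider two CDNs, $CDN_1$ and $CDN_2$, with performance parameters $0\le \beta_1<\beta_2<1$, competing by prices in the model described in the context. Let $(w_1^*,w_2^* )$ be a Nash equilibrium in prices at which both CDNs attract a set of content providers of positive measure, and let $J_k^*=J_k(w_1^*,w_2^* )$ be the equilibrium revenues. Then $$J_1^*>4J_2^*.$$
   Context: Each $CDN_k$ ($k=1,2$) has a fixed performance parameter $\beta_k\in[0,1)$ (ratio of new to old user latency; smaller is better) and announces a price $w_k\ge 0$. There is a continuum of content providers of total mass $\Lambda>0$ whose sensitivity parameters $\theta$ are uniformly distributed on $[0,1]$. A content provider with sensitivity $\theta$ that hires $CDN_k$ obtains payoff $U(\theta,k)=\theta(1-\beta_k)-w_k$; hiring no CDN gives payoff $0$. Each content provider hires at most one CDN and chooses an option (a CDN or none) of maximum payoff (indifferent providers form a set of measure zero in the situations considered). $\Lambda_k(w_1,w_2)$ is $\Lambda$ times the measure of the set of $\theta\in[0,1]$ choosing $CDN_k$, and the revenue of $CDN_k$ is $J_k(w_1,w_2)=\Lambda_k(w_1,w_2)\,w_k$. A Nash equilibrium is a pair $(w_1^*,w_2^* )$ such that $J_1(w_1^*,w_2^* )\ge J_1(w_1,w_2^* )$ for all $w_1\ge0$ and $J_2(w_1^*,w_2^* )\ge J_2(w_1^*,w_2)$ for all $w_2\ge 0$. *)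

(* Defs.v *)
From mathcomp Require Import all_boot all_order all_algebra.
From mathcomp Require Import all_classical all_reals all_analysis.
Set Implicit Arguments. Unset Strict Implicit. Unset Printing Implicit Defensive.
Import Order.TTheory GRing.Theory Num.Theory.
Local Open Scope classical_set_scope.
Local Open Scope ring_scope.

Definition payoff {R : realType} (b w th : R) : R := th * (1 - b) - w.

(* Indifferent providers form a null set. *)
Definition choosers {R : realType} (b w b' w' : R) : set R :=
  [set th | 0 <= th <= 1 /\ payoff b' w' th < payoff b w th /\ 0 < payoff b w th].

Definition demand {R : realType} (Lam b w b' w' : R) : R :=
  Lam * fine (@lebesgue_measure R (choosers b w b' w')).

Definition revenue {R : realType} (Lam b w b' w' : R) : R :=
  demand Lam b w b' w' * w.

Definition nash_eq {R : realType} (Lam b1 b2 w1 w2 : R) : Prop :=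
  0 <= w1 /\ 0 <= w2 /\
  (forall w, 0 <= w -> revenue Lam b1 w b2 w2 <= revenue Lam b1 w1 b2 w2) /\
  (forall w, 0 <= w -> revenue Lam b2 w b1 w1 <= revenue Lam b2 w2 b1 w1).

(* Main.v *)
Require Import Defs.
From mathcomp Require Import all_boot all_order all_algebra.
From mathcomp Require Import all_classical all_reals all_analysis.
From mathcomp Require Import ring lra.
Import Order.TTheory GRing.Theory Num.Theory.
Local Open Scope classical_set_scope.
Local Open Scope ring_scope.

Lemma dem1 (R : realType) (Lam b1 b2 w w2 t : R) : b1 < b2 -> b2 < 1 -> 0 <= w2 ->
  w - w2 = t * (b2 - b1) -> w2 < t * (1 - b2) -> t < 1 ->
  demand Lam b1 w b2 w2 = Lam * (1 - t).
Proof.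
move=> h12 h2 hw2 ht hs ht1.
have t0 : 0 < t by nra.
rewrite /demand.
have -> : choosers b1 w b2 w2 = [set` `]t, 1]].
  apply/seteqP; split => x /=; rewrite /choosers /payoff in_itv /=.
    move=> [/andP[x0 x1] [H1 H2]]; apply/andP; split => //; nra.
  move=> /andP[xt x1]; split; first by apply/andP; split; lra.
  split; nra.
rewrite lebesgue_measure_itv /= lte_fin ht1 /=. by [].
Qed.

Lemma dem2 (R : realType) (Lam b1 b2 w1 w2 t s : R) : b1 < b2 -> b2 < 1 ->
  w1 - w2 = t * (b2 - b1) -> w2 = s * (1 - b2) -> 0 <= s -> s < t -> t < 1 ->
  demand Lam b2 w2 b1 w1 = Lam * (t - s).
Proof.
move=> h12 h2 ht hs s0 st ht1.
rewrite /demand.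
have -> : choosers b2 w2 b1 w1 = [set` `]s, t[].
  apply/seteqP; split => x /=; rewrite /choosers /payoff in_itv /=.
    move=> [/andP[x0 x1] [H1 H2]]; apply/andP; split => //; nra.
  move=> /andP[xt x1]; split; first by apply/andP; split; lra.
  split; nra.
rewrite lebesgue_measure_itv /= lte_fin st /=. by [].
Qed.
Arguments dem1 {R} Lam {b1 b2 w w2 t}.
Arguments dem2 {R} Lam {b1 b2 w1 w2 t s}.

Lemma nonempty_of_demand (R : realType) (Lam b w b' w' : R) :
  0 < demand Lam b w b' w' -> exists th, choosers b w b' w' th.
Proof.
rewrite /demand => H.
case: (pselect (choosers b w b' w' = set0)) => [E|].
  by move: H; rewrite E measure0 /= mulr0 ltxx.
by move/eqP/set0P.
Qed.

Lemma small_zero (R : realType) (c d m : R) : 0 < d -> 0 < m ->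
  (forall e, 0 < e -> e < m -> `|c| <= e * d) -> c = 0.
Proof.
move=> d0 m0 H; apply/eqP; apply/negPn/negP => c0.
have cp : 0 < `|c| by rewrite normr_gt0.
set e := Num.min m (`|c| / d) / 2.
have mp : 0 < Num.min m (`|c| / d) by rewrite lt_min m0 divr_gt0.
have e0 : 0 < e by rewrite /e divr_gt0.
have em : e < m.
  have : Num.min m (`|c| / d) <= m by rewrite ge_min lexx.
  rewrite /e; lra.
have := H e e0 em.
have : Num.min m (`|c| / d) <= `|c| / d by rewrite ge_min lexx orbT.
have dd : d * d^-1 = 1 by rewrite mulfV // gt_eqF.
rewrite /e => h1 h2.
have : Num.min m (`|c| / d) * d <= `|c| by nra.
nra.
Qed.

Arguments nonempty_of_demand {R Lam b w b' w'}.
Arguments small_zero {R c d m}.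

Theorem theorem1 (R : realType) (Lam b1 b2 w1 w2 : R) :
  0 < Lam -> 0 <= b1 -> b1 < b2 -> b2 < 1 ->
  nash_eq Lam b1 b2 w1 w2 ->
  0 < demand Lam b1 w1 b2 w2 -> 0 < demand Lam b2 w2 b1 w1 ->
  revenue Lam b1 w1 b2 w2 > 4 * revenue Lam b2 w2 b1 w1.
Proof.
move=> L0 b10 h12 h2 [w10 [w20 [N1 N2]]] D1 D2.
have [th1 [/andP[x10 x11] [P1 Q1]]] := nonempty_of_demand D1.
have [th2 [/andP[x20 x21] [P2 Q2]]] := nonempty_of_demand D2.
move: P1 Q1 P2 Q2; rewrite /payoff => P1 Q1 P2 Q2.
set d := b2 - b1.
have d0 : 0 < d by rewrite /d subr_gt0.
have dd : d * d^-1 = 1 by rewrite mulfV // gt_eqF.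
have ee : (1 - b2) * (1 - b2)^-1 = 1 by rewrite mulfV // gt_eqF // subr_gt0.
have e0 : 0 < (1 - b2)^-1 by rewrite invr_gt0 subr_gt0.
have di0 : 0 < d^-1 by rewrite invr_gt0.
set t := (w1 - w2) / d.
set s := w2 / (1 - b2).
have ht : w1 - w2 = t * d by rewrite /t -mulrA [d^-1 * d]mulrC dd mulr1.
have hs : w2 = s * (1 - b2) by rewrite /s -mulrA [_^-1 * _]mulrC ee mulr1.
have s0 : 0 <= s by rewrite /s mulr_ge0 // ltW.
have tlt1 : t < 1 by rewrite /d in ht; nra.
have th2t : th2 < t by rewrite /d in ht; nra.
have st : s < th2 by nra.
have E1 := dem1 Lam h12 h2 w20 ht (ltac:(nra)) tlt1.
have st2 : s < t by lra.
have E2 := dem2 Lam h12 h2 ht hs s0 st2 tlt1.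
(* first-order condition for CDN1 *)
have foc : (1 - t) * d - w1 = 0.
  apply: (small_zero d0 (m := Num.min (t - s) (1 - t))).
    by rewrite lt_min !subr_gt0 tlt1 andbT; lra.
  move=> e ep em.
  have em1 : e < t - s by move: em; rewrite lt_min => /andP[].
  have em2 : e < 1 - t by move: em; rewrite lt_min => /andP[].
  have Hx : w1 + e * d - w2 = (t + e) * d.
  by rewrite mulrDl -ht addrAC.
  have Ea := dem1 Lam h12 h2 w20 (t := t + e) (w := w1 + e * d) Hx
     (ltac:(nra)) (ltac:(lra)).
  have Eb := dem1 Lam h12 h2 w20 (t := t - e) (w := w1 - e * d) (ltac:(by rewrite mulrBl -ht addrAC))
     (ltac:(nra)) (ltac:(lra)).
  have Ra := N1 (w1 + e * d) (ltac:(nra)).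
  have Rb := N1 (w1 - e * d) (ltac:(nra)).
  move: Ra Rb; rewrite /revenue Ea Eb E1 => Ra Rb.
  have Ra' : (1 - (t + e)) * (w1 + e * d) <= (1 - t) * w1.
    by rewrite -(ler_pM2l L0) !mulrA.
  have Rb' : (1 - (t - e)) * (w1 - e * d) <= (1 - t) * w1.
    by rewrite -(ler_pM2l L0) !mulrA.
  rewrite ler_norml; apply/andP; split; nra.
rewrite /revenue E1 E2.
have w1p : 0 < w1 by nra.
have key : 4 * ((t - s) * w2) < (1 - t) * w1.
  have : 4 * ((t - s) * w2) * d < (1 - t) * w1 * d.
    have hw : (1 - t) * d = w1 by lra.
    case: (ltrgt0P w2) => [w2p||w2z].
    - have sp : 0 < s by nra.
      have e1 : t * d * w2 = (w1 - w2) * w2 by rewrite -ht.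
      have e2 : (1 - t) * d * w1 = w1 * w1 by rewrite hw.
      have := mulr_gt0 (mulr_gt0 sp d0) w2p.
      have := sqr_ge0 (w1 - 2 * w2).
      nra.
    - lra.
    - rewrite w2z; nra.
  by rewrite ltr_pM2r.
rewrite -mulrA; nra.
Qed.
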